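(* Let $\mathcal H_A$ be a finite-dimensional Hilbert space, $N\ge1$, and $\mathcal F(A)\subseteq\mathcal D(\mathcal H_A)$ a set of free states which is affine, with $N$-partite free states $\mathcal F(A_1\dots A_N)=\mathrm{Aff}\big(\mathcal F(A)\otimes\dots\otimes\mathcal F(A)\big)$ ($N$ factors). Suppose $\Delta$ is a resource-destroying map for $\mathcal F(A)$. Then the censorship implemented by $\Delta^{\otimes N}$ is unbreakable: there is no $\rho\in\mathcal D(\mathcal H_A^{\otimes N})$ with $\rho\notin\mathcal F(A_1\dots A_N)$ and $\Delta^{\otimes N}(\rho)=\rho$.
   Context: For a finite-dimensional Hilbert space $\mathcal H$, $\mathcal D(\mathcal H)$ denotes the set of density operators on $\mathcal H$. For $S\subseteq\mathcal D(\mathcal H)$, $\mathrm{Aff}(S)=\{\sum_a t_a\sigma_a:\ \text{finitely many }\sigma_a\in S,\ t_a\in\mathbb R,\ \sum_a t_a=1\}\cap\mathcal D(\mathcal H)$; $S$ is affine if $\mathrm{Aff}(S)=S$. For sets of states, $S_1\otimes\dots\otimes S_N=\{\rho_1\otimes\dots\otimes\rho_N:\rho_a\in S_a\}$. A channel is a linear completely positive trace-preserving map. A resource-destroying (RD) map for $\mathcal F(A)$ is a channel $\Delta$ on operators on $\mathcal H_A$ such that $\Delta(\rho)\in\mathcal F(A)$ for all $\rho\in\mathcal D(\mathcal H_A)$ and $\Delta(\sigma)=\sigma$ for all $\sigma\in\mathcal F(A)$. *)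

(* Defs.v *)
From HB Require Import structures.
From mathcomp Require Import all_boot all_order all_algebra.
From mathcomp Require Import complex mxtens.
From mathcomp Require Import reals.
Set Implicit Arguments. Unset Strict Implicit. Unset Printing Implicit Defensive.
Import Order.TTheory GRing.Theory Num.Theory.
Local Open Scope ring_scope.

(* The N-fold tensor product of C^d is C^(d^N), with the
   Kronecker product *t of mathcomp-real-closed's mxtens. *)

Section Quantum.
Variable C : numClosedFieldType.

Definition adjmx {m n} (A : 'M[C]_(m, n)) : 'M[C]_(n, m) := (map_mx Num.conj A)^T.

Definition psd {n} (X : 'M[C]_n) : Prop :=
  forall v : 'cV[C]_n, 0 <= (adjmx v *m X *m v) 0 0.

Definition density {n} (X : 'M[C]_n) : Prop := psd X /\ \tr X = 1.

Definition tensmap {m n} (f : 'M[C]_m -> 'M[C]_m) (g : 'M[C]_n -> 'M[C]_n)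
  (X : 'M[C]_(m * n)) : 'M[C]_(m * n) :=
  \sum_(i < m) \sum_(j < m) \sum_(k < n) \sum_(l < n)
    X (mxtens_index (i, k)) (mxtens_index (j, l)) *:
      (f (delta_mx i j) *t g (delta_mx k l)).

Definition CP {d} (D : 'M[C]_d -> 'M[C]_d) : Prop :=
  forall (k : nat) (X : 'M[C]_(k * d)), psd X -> psd (tensmap id D X).

Definition TP {d} (D : 'M[C]_d -> 'M[C]_d) : Prop :=
  forall X, \tr (D X) = \tr X.

Definition channel {d} (D : {linear 'M[C]_d -> 'M[C]_d}) : Prop :=
  CP D /\ TP D.

Definition RD_map {d} (F : 'M[C]_d -> Prop) (D : {linear 'M[C]_d -> 'M[C]_d})
  : Prop :=
  channel D /\ (forall rho, density rho -> F (D rho))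
            /\ (forall sigma, F sigma -> D sigma = sigma).

Fixpoint tensN_rec {d} (rho : nat -> 'M[C]_d) (k : nat) : 'M[C]_(d ^ k.+1) :=
  match k return 'M[C]_(d ^ k.+1) with
  | k'.+1 => rho 0%N *t tensN_rec (fun i => rho i.+1) k'
  | 0 => rho 0%N
  end.

Definition tensN {d} (rho : nat -> 'M[C]_d) (N : nat) : 'M[C]_(d ^ N) :=
  if N is N'.+1 return 'M[C]_(d ^ N) then tensN_rec rho N' else 1.

Fixpoint tpow_rec {d} (D : 'M[C]_d -> 'M[C]_d) (k : nat) :
  'M[C]_(d ^ k.+1) -> 'M[C]_(d ^ k.+1) :=
  match k return 'M[C]_(d ^ k.+1) -> 'M[C]_(d ^ k.+1) with
  | k'.+1 => fun X => @tensmap d (d ^ k'.+1) D (@tpow_rec d D k') X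
  | 0 => D
  end.

Definition tpow {d} (D : 'M[C]_d -> 'M[C]_d) (N : nat) :
  'M[C]_(d ^ N) -> 'M[C]_(d ^ N) :=
  if N is N'.+1 return 'M[C]_(d ^ N) -> 'M[C]_(d ^ N) then @tpow_rec d D N'
  else id.

Definition prodset {d} (S : 'M[C]_d -> Prop) (N : nat) : 'M[C]_(d ^ N) -> Prop :=
  fun X => exists rho : nat -> 'M[C]_d,
    (forall i, (i < N)%N -> S (rho i)) /\ X = tensN rho N.

End Quantum.
Arguments tpow {C d} D N _.
Arguments tpow_rec {C d} D k _.
Arguments tensN {C d} rho N.
Arguments tensN_rec {C d} rho k.
Arguments prodset {C d} S N _.
Arguments tensmap {C m n} f g X.


Section Affine.
Variable R : realType.
Local Notation C := R[i].

Definition Aff {n} (S : 'M[C]_n -> Prop) : 'M[C]_n -> Prop :=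
  fun X => density X /\
    exists (k : nat) (t : 'I_k -> R) (sigma : 'I_k -> 'M[C]_n),
      (forall a, S (sigma a)) /\ \sum_(a < k) t a = 1 /\
      X = \sum_(a < k) (Complex (t a) 0) *: sigma a.

Definition affine {n} (S : 'M[C]_n -> Prop) : Prop :=
  forall X, Aff S X <-> S X.
End Affine.

(* Main.v *)
Require Import Defs.
From mathcomp Require Import all_boot all_order all_algebra.
From mathcomp Require Import complex mxtens reals.
From mathcomp Require Import ring.
Import GRing.Theory Num.Theory.
Local Open Scope ring_scope.

Section Gen.
Variable C : numClosedFieldType.

Definition cspan {n} (G : 'M[C]_n -> Prop) (X : 'M[C]_n) : Prop :=
  exists s : seq (C * 'M[C]_n),
    (forall p, p \in s -> G p.2) /\ X = \sum_(p <- s) p.1 *: p.2.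

Lemma span0 n (G : 'M[C]_n -> Prop) : cspan G 0.
Proof. by exists [::]; split => //; rewrite big_nil. Qed.

Lemma spanD n (G : 'M[C]_n -> Prop) X Y : cspan G X -> cspan G Y -> cspan G (X + Y).
Proof.
move=> [s [Hs ->]] [t [Ht ->]]; exists (s ++ t); split; last by rewrite big_cat.
by move=> p; rewrite mem_cat => /orP [] ?; [apply: Hs|apply: Ht].
Qed.

Lemma spanZ n (G : 'M[C]_n -> Prop) c X : cspan G X -> cspan G (c *: X).
Proof.
move=> [s [Hs ->]]; exists [seq (c * p.1, p.2) | p <- s]; split.
  move=> p /mapP [q qs ->] /=; exact: Hs.
by rewrite big_map scaler_sumr; apply: eq_bigr => p _; rewrite scalerA.
Qed.

Lemma spanN n (G : 'M[C]_n -> Prop) X : cspan G X -> cspan G (- X).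
Proof. by move=> h; rewrite -scaleN1r; apply: spanZ. Qed.

Lemma spanB n (G : 'M[C]_n -> Prop) X Y : cspan G X -> cspan G Y -> cspan G (X - Y).
Proof. by move=> h1 h2; apply: spanD => //; apply: spanN. Qed.

Lemma spanG n (G : 'M[C]_n -> Prop) X : G X -> cspan G X.
Proof.
move=> GX; exists [:: (1, X)]; split; last by rewrite big_seq1 scale1r.
by move=> p; rewrite inE => /eqP ->.
Qed.

Lemma span_mono n (G G' : 'M[C]_n -> Prop) X :
  (forall Y, G Y -> G' Y) -> cspan G X -> cspan G' X.
Proof. by move=> h [s [Hs E]]; exists s; split => // p /Hs /h. Qed.

Lemma span_lin n m (G : 'M[C]_n -> Prop) (G' : 'M[C]_m -> Prop)
  (f : {linear 'M[C]_n -> 'M[C]_m}) X :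
  (forall Y, G Y -> cspan G' (f Y)) -> cspan G X -> cspan G' (f X).
Proof.
move=> h [s [Hs ->]]; rewrite linear_sum big_seq.
apply: (big_ind (cspan G')); [exact: span0|exact: spanD|].
by move=> p ps; rewrite linearZ; apply: spanZ; apply: h; apply: Hs.
Qed.

Lemma adjmxK m n (A : 'M[C]_(m, n)) : adjmx (adjmx A) = A.
Proof. by apply/matrixP => i j; rewrite !mxE conjCK. Qed.

Lemma adjmxM m n p (A : 'M[C]_(m, n)) (B : 'M[C]_(n, p)) :
  adjmx (A *m B) = adjmx B *m adjmx A.
Proof. by rewrite /adjmx map_mxM trmx_mul. Qed.

Lemma adjmxD m n (A B : 'M[C]_(m, n)) : adjmx (A + B) = adjmx A + adjmx B.
Proof. by apply/matrixP => i j; rewrite !mxE rmorphD. Qed.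

Lemma adjmxZ m n c (A : 'M[C]_(m, n)) : adjmx (c *: A) = c^* *: adjmx A.
Proof. by apply/matrixP => i j; rewrite !mxE rmorphM. Qed.

Lemma psd_outer n (u : 'cV[C]_n) : psd (u *m adjmx u).
Proof.
move=> v.
have -> : adjmx v *m (u *m adjmx u) *m v = (adjmx v *m u) *m adjmx (adjmx v *m u).
  by rewrite adjmxM adjmxK !mulmxA.
by rewrite mxE big_ord1 !mxE mul_conjC_ge0.
Qed.

Lemma psd_scale n c (X : 'M[C]_n) : 0 <= c -> psd X -> psd (c *: X).
Proof.
move=> c0 hX v; rewrite -scalemxAr -scalemxAl mxE; exact: mulr_ge0.
Qed.

Lemma span_density n (X : 'M[C]_n) : psd X -> 0 < \tr X -> cspan (@density C _) X.
Proof.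
move=> hX ht.
have -> : X = \tr X *: ((\tr X)^-1 *: X) by rewrite scalerA mulfV ?lt0r_neq0 ?scale1r.
apply: spanZ; apply: spanG; split.
  by apply: psd_scale => //; rewrite invr_ge0 Order.POrderTheory.ltW.
by rewrite mxtraceZ mulVf ?lt0r_neq0.
Qed.

Lemma span_outer n (u : 'cV[C]_n) i : u i 0 = 1 -> cspan (@density C _) (u *m adjmx u).
Proof.
move=> ui; apply: span_density; first exact: psd_outer.
rewrite mxtrace_mulC /mxtrace big_ord1 mxE (bigD1 i) //= !mxE ui conjC1 mulr1.
apply: ltr_wpDr; last exact: ltr01.
by apply: sumr_ge0 => k _; rewrite !mxE mulrC mul_conjC_ge0.
Qed.

Definition vec {n} (i j : 'I_n) (w : C) : 'cV[C]_n :=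
  \col_k ((k == i)%:R + w * (k == j)%:R).

Lemma outerE n (u : 'cV[C]_n) a b : (u *m adjmx u) a b = u a 0 * (u b 0)^*.
Proof. by rewrite mxE big_ord1 !mxE. Qed.

Lemma span_all n (X : 'M[C]_n) : cspan (@density C _) X.
Proof.
have dii : forall i : 'I_n, cspan (@density C _) (delta_mx i i).
  move=> i; have -> : delta_mx i i = vec i i 0 *m adjmx (vec i i 0).
    apply/matrixP => a b; rewrite outerE !mxE !mul0r !addr0.
    by case: (a == i); case: (b == i); rewrite /= ?conjC0 ?conjC1 ?mulr0 ?mulr1.
  by apply: (@span_outer _ _ i); rewrite !mxE ?eqxx ?mul0r ?addr0.
rewrite (matrix_sum_delta X).
apply: (big_ind (cspan (@density C _))); [exact: span0|exact: spanD|move=> i _].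
apply: (big_ind (cspan (@density C _))); [exact: span0|exact: spanD|move=> j _].
apply: spanZ; have [<-|ij] := eqVneq i j; first exact: dii.
have hi : 'i * 'i^* = 1 :> C by rewrite conjCi mulrN -expr2 sqrCi opprK.
have hii : 'i * 'i = -1 :> C by rewrite -expr2 sqrCi.
have -> : delta_mx i j = 2^-1 *: ((vec i j 1 *m adjmx (vec i j 1) - delta_mx i i
     - delta_mx j j) + 'i *: (vec i j 'i *m adjmx (vec i j 'i) - delta_mx i i
     - delta_mx j j)).
  apply/matrixP => a b; rewrite !mxE !big_ord1 !mxE.
  have hA : ~~ ((a == i) && (a == j)).
    by apply/negP => /andP [/eqP -> /eqP h]; move: ij; rewrite h eqxx.
  have hB : ~~ ((b == i) && (b == j)).
    by apply/negP => /andP [/eqP -> /eqP h]; move: ij; rewrite h eqxx.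
  move: hA hB; case: (a == i); case: (a == j); case: (b == i); case: (b == j);
  rewrite //= ?mulr1n ?mulr0n => _ _;
  rewrite ?conjC0 ?conjC1 ?mulr0 ?mul0r ?mulr1 ?mul1r ?addr0 ?add0r ?subr0 ?sub0r ?hi ?hii ?conjC0 ?conjC1 ?mulr0 ?mul0r ?mulr1 ?mul1r ?addr0 ?add0r ?subr0 ?subrr ?hi ?hii;
  try field; rewrite ?pnatr_eq0 //.
eapply spanZ.
have o1 : forall w, cspan (@density C _) (vec i j w *m adjmx (vec i j w)).
  by move=> w; apply: (@span_outer _ _ i); rewrite !mxE eqxx (negbTE ij) mulr0 addr0.
apply: spanD; last eapply spanZ; apply: spanB; try apply: dii; apply: spanB;
  by [apply: o1 | apply: dii].
Qed.


Lemma adjmx_delta n (a : 'I_n) : adjmx (delta_mx a (0 : 'I_1)) = delta_mx 0 a :> 'M[C]_(1, n).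
Proof.
apply/matrixP => i j; rewrite !mxE.
by case: (j == a); case: (i == 0); rewrite /= ?conjC0 ?conjC1.
Qed.

Lemma qform n (X : 'M[C]_n) a b :
  (delta_mx (0 : 'I_1) a *m X *m delta_mx b (0 : 'I_1)) 0 0 = X a b.
Proof. by rewrite -rowE -colE !mxE. Qed.

Lemma qformM n (X : 'M[C]_n) a b :
  delta_mx (0 : 'I_1) a *m X *m delta_mx b (0 : 'I_1) = (X a b)%:M.
Proof. by apply/matrixP => x y; rewrite [x]ord1 [y]ord1 qform mxE eqxx mulr1n. Qed.

Lemma quad_expand n (Y : 'M[C]_n) a b w :
  let v : 'cV[C]_n := delta_mx a 0 + w *: delta_mx b 0 in
  (adjmx v *m Y *m v) 0 0 = Y a a + w * Y a b + w^* * Y b a + w^* * w * Y b b.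
Proof.
move=> v; rewrite /v adjmxD adjmxZ !adjmx_delta.
rewrite !mulmxDl !mulmxDr -!scalemxAl -!scalemxAr !scalerA !qformM !mxE !mulr1n.
by rewrite !addrA.
Qed.

Lemma psd_herm n (X : 'M[C]_n) : psd X -> adjmx X = X.
Proof.
move=> hX.
pose Y := adjmx X - X.
have hY : forall v : 'cV[C]_n, (adjmx v *m Y *m v) 0 0 = 0.
  move=> v; rewrite /Y mulmxBr mulmxBl mxE.
  have -> : (adjmx v *m adjmx X *m v) = adjmx (adjmx v *m X *m v).
    by rewrite !adjmxM adjmxK mulmxA.
  by rewrite mxE mxE (geC0_conj (hX v)) [X in _ + X]mxE subrr.
have hd : forall a, Y a a = 0.
  by move=> a; move: (hY (delta_mx a 0)); rewrite adjmx_delta qform.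
apply/eqP; rewrite -subr_eq0; apply/eqP/matrixP => a b; rewrite [RHS]mxE.
rewrite -/Y.
have h1 := hY (delta_mx a 0 + 1 *: delta_mx b 0).
rewrite quad_expand !hd conjC1 !mul1r ?mulr0 ?addr0 ?add0r in h1.
have h2 := hY (delta_mx a 0 + 'i *: delta_mx b 0).
rewrite quad_expand !hd ?mulr0 ?addr0 ?add0r conjCi mulNr -mulrN -mulrDr in h2.
have h3 : Y a b - Y b a = 0.
  by apply/eqP; move/eqP: h2; rewrite mulf_eq0 (negbTE (neq0Ci C)).
move: h1 h3; move: (Y a b) (Y b a) => x y h1 h3.
have -> : x = 2^-1 * ((x + y) + (x - y)) by field.
by rewrite h1 h3 addr0 mulr0.
Qed.

Lemma tensmxDl m n p q (A B : 'M[C]_(m, n)) (E : 'M[C]_(p, q)) :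
  (A + B) *t E = A *t E + B *t E.
Proof. by apply/matrixP => i j; rewrite !mxE mulrDl. Qed.
Lemma tensmxDr m n p q (A : 'M[C]_(m, n)) (B E : 'M[C]_(p, q)) :
  A *t (B + E) = A *t B + A *t E.
Proof. by apply/matrixP => i j; rewrite !mxE mulrDr. Qed.
Lemma tensmxZl m n p q c (A : 'M[C]_(m, n)) (E : 'M[C]_(p, q)) :
  (c *: A) *t E = c *: (A *t E).
Proof. by apply/matrixP => i j; rewrite !mxE mulrA. Qed.
Lemma tensmxZr m n p q c (A : 'M[C]_(m, n)) (E : 'M[C]_(p, q)) :
  A *t (c *: E) = c *: (A *t E).
Proof. by apply/matrixP => i j; rewrite !mxE mulrCA. Qed.

Lemma adjmx_tens m n p q (A : 'M[C]_(m, n)) (B : 'M[C]_(p, q)) :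
  adjmx (A *t B) = adjmx A *t adjmx B.
Proof. by rewrite /adjmx map_mxT trmx_tens. Qed.

Lemma tr_tens m n (A : 'M[C]_m) (B : 'M[C]_n) : \tr (A *t B) = \tr A * \tr B.
Proof. by rewrite /mxtrace mulr_sum; apply: eq_bigr => k _; rewrite !mxE. Qed.

Section Tens.
Variables (d : nat) (F : 'M[C]_d -> Prop).

Definition gen (k : nat) (X : 'M[C]_(d ^ k.+1)) : Prop :=
  exists rho : nat -> 'M[C]_d, (forall i, (i <= k)%N -> F (rho i)) /\ X = tensN_rec rho k.

Lemma gen_cons k A Y : F A -> gen k Y -> gen k.+1 (A *t Y).
Proof.
move=> FA [rho [hr ->]].
exists (fun i => if i is i'.+1 then rho i' else A); split => //.
by case=> // i /= hi; apply: hr.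
Qed.

Lemma span_tens k A B : cspan F A -> cspan (gen k) B -> cspan (gen k.+1) (A *t B).
Proof.
move=> [s [Hs ->]] [t [Ht ->]].
have inner : forall A0, F A0 -> cspan (gen k.+1) (A0 *t \sum_(q <- t) q.1 *: q.2).
  move=> A0 FA0; elim: t Ht => [|q t IHt] Ht; first by rewrite big_nil tensmx0; apply: span0.
  rewrite big_cons tensmxDr tensmxZr; apply: spanD; last first.
    by apply: IHt => r rt; apply: Ht; rewrite inE rt orbT.
  apply: spanZ; apply: spanG; apply: gen_cons => //; apply: Ht; exact: mem_head.
elim: s Hs => [|p s IH] Hs; first by rewrite big_nil tens0mx; apply: span0.
rewrite big_cons tensmxDl tensmxZl; apply: spanD; last first.
  by apply: IH => q qs; apply: Hs; rewrite inE qs orbT.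
apply: spanZ; apply: inner; apply: Hs; exact: mem_head.
Qed.

Variable D : {linear 'M[C]_d -> 'M[C]_d}.
Hypothesis hD : forall Y, cspan F (D Y).

Lemma tpow_span k X : cspan (gen k) (tpow_rec D k X).
Proof.
elim: k X => [|k IH] X /=.
  apply: span_mono (hD X) => Y FY; exists (fun _ => Y); split => //.
rewrite /tensmap.
apply: (big_ind (cspan (gen k.+1))); [exact: span0|exact: spanD|move=> i _].
apply: (big_ind (cspan (gen k.+1))); [exact: span0|exact: spanD|move=> j _].
apply: (big_ind (cspan (gen k.+1))); [exact: span0|exact: spanD|move=> a _].
apply: (big_ind (cspan (gen k.+1))); [exact: span0|exact: spanD|move=> b _].
eapply spanZ; apply: span_tens => //; exact: IH.
Qed.

Hypothesis Fd : forall X, F X -> density X.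

Lemma gen_herm k X : gen k X -> adjmx X = X /\ \tr X = 1.
Proof.
elim: k X => [|k IH] X [rho [hr ->]] /=.
  by have [hp ht] := Fd _ (hr 0%N (leqnn 0)); split => //; apply: psd_herm.
have [hp ht] := Fd _ (hr 0%N isT).
have [h1 h2] := IH (tensN_rec (fun i => rho i.+1) k)
  (ex_intro _ (fun i => rho i.+1) (conj (fun i hi => hr i.+1 hi) erefl)).
by rewrite adjmx_tens tr_tens h1 h2 ht mulr1 (psd_herm _ _ hp).
Qed.

End Tens.

End Gen.

Arguments cspan {_ _} _ : rename.
Arguments gen {_ _} _ _ : rename.

Lemma ReD (R : realType) (a b : R[i]) : complex.Re (a + b) = complex.Re a + complex.Re b.
Proof. by case: a; case: b. Qed.

Lemma Re_sum (R : realType) (I : Type) (s : seq I) (f : I -> R[i]) :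
  complex.Re (\sum_(x <- s) f x) = \sum_(x <- s) complex.Re (f x).
Proof. by elim: s => [|x s IH]; rewrite ?big_nil ?big_cons // ReD IH. Qed.

Lemma adjmx_sum (C : numClosedFieldType) n (s : seq (C * 'M[C]_n)) :
  adjmx (\sum_(p <- s) p.1 *: p.2) = \sum_(p <- s) p.1^* *: adjmx p.2.
Proof.
elim: s => [|p s IH]; rewrite ?big_nil ?big_cons.
  by apply/matrixP => i j; rewrite !mxE conjC0.
by rewrite adjmxD adjmxZ IH.
Qed.

Theorem theorem2 (R : realType) (d N : nat) (F : 'M[R[i]]_d -> Prop)
  (D : {linear 'M[R[i]]_d -> 'M[R[i]]_d}) :
  (0 < N)%N ->
  (forall X, F X -> density X) ->
  affine F ->
  RD_map F D ->
  ~ exists rho : 'M[R[i]]_(d ^ N),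
      density rho /\ ~ Aff (prodset F N) rho /\ tpow D N rho = rho.
Proof.
move=> N0 Fd _ [_ [hRD _]] [rho [drho [naff hfix]]].
apply: naff; case: N N0 rho drho hfix => // N' _ rho drho hfix.
have hD : forall Y, cspan F (D Y).
  move=> Y; apply: (@span_lin _ _ _ (@density _ _) F D Y); last exact: span_all.
  by move=> Z hZ; apply: spanG; apply: hRD.
have : cspan (gen F N') rho by rewrite -hfix; exact: tpow_span.
move=> [s [Hs Erho]].
have herm : forall p, p \in s -> adjmx p.2 = p.2 /\ \tr p.2 = 1.
  by move=> p ps; apply: (@gen_herm _ _ F Fd N'); apply: Hs.
split => //.
exists (size s), (fun a => complex.Re (nth (0,0) s a).1), (fun a => (nth (0,0) s a).2).
split; [|split].
- move=> a; have [r [hr ->]] := Hs _ (mem_nth (0,0) (ltn_ord a)).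
  by exists r; split => // i hi; apply: hr.
- have : \tr rho = 1 by case: drho.
  rewrite Erho raddf_sum.
  rewrite (eq_big_seq (fun p => p.1)); last first.
    by move=> p ps; change (\tr (p.1 *: p.2) = p.1); rewrite mxtraceZ (herm p ps).2 mulr1.
  move/(congr1 (@complex.Re R)); rewrite Re_sum (big_nth (0,0)) big_mkord.
  by move=> ->.
- have hr : adjmx rho = rho by apply: psd_herm; case: drho.
  have -> : rho = 2^-1 *: (rho + adjmx rho).
    rewrite hr scalerDr -scalerDl.
    have -> : (2^-1 + 2^-1 : R[i]) = 1 by field.
    by rewrite scale1r.
  rewrite {2}Erho adjmx_sum.
  under eq_big_seq => p ps do rewrite (herm p ps).1.
  rewrite {1}Erho -big_split /= scaler_sumr (big_nth (0,0)) big_mkord.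
  apply: eq_bigr => a _; rewrite -scalerDl scalerA; congr (_ *: _).
  by rewrite complexr0 ReJ_add mulrC.
Qed.
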